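(* Let $n\ge1$, let $\mathcal{X}_0=\{x_0\}$ be a singleton and let $\mathcal{X}_1,\dots,\mathcal{X}_n$ (states) and $\mathcal{O}_1,\dots,\mathcal{O}_n$ (outputs) be finite non-empty sets. For each $k\in\{1,\dots,n\}$ let $\underline{Q}_k(\cdot\mid z_{k-1})$ ($z_{k-1}\in\mathcal{X}_{k-1}$) be coherent lower previsions on gambles on $\mathcal{X}_k$ and $\underline{S}_k(\cdot\mid z_k)$ ($z_k\in\mathcal{X}_k$) coherent lower previsions on gambles on $\mathcal{O}_k$, and let $\underline{P}_k(\cdot\mid z_{k-1})$ and $\underline{E}_k(\cdot\mid z_k)$ be the joint models of the imprecise hidden Markov model described in the context. Assume that all local upper previsions are positive: $\overline{Q}_k(\{z_k\}\mid z_{k-1})>0$ and $\overline{S}_k(\{o_k\}\mid z_k)>0$ for all $k\in\{1,\dots,n\}$, $z_{k-1}\in\mathcal{X}_{k-1}$, $z_k\in\mathcal{X}_k$, $o_k\in\mathcal{O}_k$. Then for all $k\in\{1,\dots,n\}$, $z_{k-1}\in\mathcal{X}_{k-1}$, $z_k\in\mathcal{X}_k$ and $o_{k:n}\in\mathcal{O}_{k:n}$: $$\overline{P}_k(\{o_{k:n}\}\mid z_{k-1})>0\quad\text{and}\quad \overline{E}_k(\{o_{k:n}\}\mid z_k)>0,$$ where these denote the upper probabilities of the event that the outputs $(O_k,\dots,O_n)$ equal $o_{k:n}$.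
   Context: A gamble on a finite set $\mathcal{Y}$ is a real-valued map on $\mathcal{Y}$. A coherent lower prevision $\underline{P}$ on gambles on $\mathcal{Y}$ satisfies: $\underline{P}(f)\ge\min f$; $\underline{P}(\lambda f)=\lambda\underline{P}(f)$ for $\lambda\ge0$; $\underline{P}(f+g)\ge\underline{P}(f)+\underline{P}(g)$. Its conjugate upper prevision is $\overline{P}(f)=-\underline{P}(-f)$; for an event $A$, $\underline{P}(A)=\underline{P}(\mathbb{I}_A)$, $\overline{P}(A)=\overline{P}(\mathbb{I}_A)$ with $\mathbb{I}_A$ the indicator. Conditional lower previsions are families of such, indexed by the value of the conditioning variable, and upper versions are obtained by conjugacy pointwise. For $k\le\ell$ write $\mathcal{X}_{k:\ell}=\times_{r=k}^\ell\mathcal{X}_r$, $\mathcal{O}_{k:\ell}=\times_{r=k}^\ell\mathcal{O}_r$, with generic elements $x_{k:\ell}$, $o_{k:\ell}$; $\mathbb{I}_{o_{k:n}}$ is the indicator of $\{o_{k:n}\}$ viewed as a gamble on $\mathcal{X}_{k:n}\times\mathcal{O}_{k:n}$ (or $\mathcal{X}_{k+1:n}\times\mathcal{O}_{k:n}$). Joint model (credal tree under epistemic irrelevance for the hidden Markov chain $X_1\to\dots\to X_n$ with outputs $X_k\to O_k$): $\underline{E}_n(\cdot\mid z_n):=\underline{S}_n(\cdot\mid z_n)$; for $k\in\{1,\dots,n-1\}$, $\underline{E}_k(\cdot\mid X_k)$, on gambles on $\mathcal{X}_{k+1:n}\times\mathcal{O}_{k:n}$, is the conditionally independent natural extension of $\underline{S}_k(\cdot\mid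 X_k)$ and $\underline{P}_{k+1}(\cdot\mid X_k)$, i.e. the pointwise smallest separately coherent conditional lower prevision that is jointly coherent with and coincides on their domains with both of them and expresses that, conditional on $X_k$, the variables $O_k$ and $(X_{k+1:n},O_{k+1:n})$ are epistemically irrelevant to one another. For $k\in\{1,\dots,n\}$ and every gamble $f$ on $\mathcal{X}_{k:n}\times\mathcal{O}_{k:n}$, $\underline{P}_k(f\mid z_{k-1}):=\underline{Q}_k\big(\sum_{z_k\in\mathcal{X}_k}\mathbb{I}_{\{z_k\}}\,\underline{E}_k(f(z_k,\cdot)\mid z_k)\,\big|\,z_{k-1}\big)$ (marginal extension). $\underline{Q}_1(\cdot\mid x_0)$ is the marginal model of $X_1$, and the global joint model is $\underline{P}:=\underline{P}_1(\cdot\mid x_0)$. *)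

(* Defs.v *)
From HB Require Import structures.
From mathcomp Require Import all_boot all_order all_algebra.
From mathcomp Require Import reals.
Set Implicit Arguments. Unset Strict Implicit. Unset Printing Implicit Defensive.
Import Order.TTheory GRing.Theory Num.Theory.
Local Open Scope ring_scope.

(* Ys X O m k  =  X_k x (O_k x (X_{k+1} x (O_{k+1} x ... (X_{k+m-1} x
   (O_{k+m-1} x unit))))), i.e. the space X_{k:k+m-1} x O_{k:k+m-1}.         *)
Fixpoint Ys (X O : nat -> finType) (m k : nat) : finType :=
  match m with
  | 0 => unit
  | m'.+1 => (X k * (O k * Ys X O m' k.+1))%type
  end.

Fixpoint Os (O : nat -> finType) (m k : nat) : finType :=
  match m with
  | 0 => unit
  | m'.+1 => (O k * Os O m' k.+1)%type
  end.

Fixpoint outs (X O : nat -> finType) (m k : nat) : Ys X O m k -> Os O m k :=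
  match m return Ys X O m k -> Os O m k with
  | 0 => fun _ => tt
  | m'.+1 => fun w => (w.2.1, @outs X O m' k.+1 w.2.2)
  end.

(* gambles on A are maps A -> R; a lower prevision is a map on all gambles *)
Definition coherent_lp (R : realType) (A : finType) (P : (A -> R) -> R) : Prop :=
  [/\ (forall (f : A -> R) (c : R), (forall a, c <= f a) -> c <= P f),
      (forall (l : R) (f : A -> R), 0 <= l -> P (fun a => l * f a) = l * P f) &
      (forall f g : A -> R, P f + P g <= P (fun a => f a + g a))].

Definition upper (R : realType) (A : finType) (P : (A -> R) -> R) (f : A -> R) : R :=
  - P (fun a => - f a).

Definition ind (R : realType) (A : finType) (p : pred A) : A -> R :=
  fun a => (p a)%:R.

(* A conditional lower prevision on gambles on W, conditional on the partition
   of W given by the fibres of [cpart] (a variable with values in [cidx]). *)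
Record clp (R : realType) (W : finType) := CLP {
  cidx : finType;
  cpart : W -> cidx;
  cval : cidx -> (W -> R) -> R }.
Arguments cidx {R W} c.
Arguments cpart {R W} c _.
Arguments cval {R W} c _ _.

(* G(f|B) = sum_{B in partition} I_B (f - P(f|B)) *)
Definition Gclp (R : realType) (W : finType) (c : clp R W) (f : W -> R) : W -> R :=
  fun w => f w - cval c (cpart c w) f.

(* w belongs to S(f) := union of the blocks B with I_B f <> 0 *)
Definition inSupp (R : realType) (W : finType) (c : clp R W) (f : W -> R) (w : W) : bool :=
  [exists w', (cpart c w' == cpart c w) && (f w' != 0)].

(* Walley's (joint) coherence of a finite family of conditional lower
   previsions, all with the linear space of all gambles as domain:
   for all f_j, j0, f0, and block B0 of the j0-th partition (given by a point w0),
     sup_{w in B0 u S(f)} [ sum_j G_j(f_j|B_j) - G_{j0}(f0|B0) ](w) >= 0.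
   Since the set B0 u S(f) is finite and non-empty, the sup is >= 0 iff some
   point of it has a non-negative value. *)
Definition coherent_family (R : realType) (W : finType) (m : nat)
    (F : 'I_m -> clp R W) : Prop :=
  forall (fs : 'I_m -> W -> R) (j0 : 'I_m) (f0 : W -> R) (w0 : W),
  exists w : W,
    ((cpart (F j0) w == cpart (F j0) w0) || [exists j, inSupp (F j) (fs j) w]) &&
    (0 <= \sum_(j < m) Gclp (F j) (fs j) w
          - (if cpart (F j0) w == cpart (F j0) w0 then Gclp (F j0) f0 w else 0)).

Definition fam3 (R : realType) (W : finType) (c1 c2 c3 : clp R W) : 'I_3 -> clp R W :=
  fun j => nth c1 [:: c1; c2; c3] j.

Definition uncond (R : realType) (W : finType) (P : (W -> R) -> R) : clp R W :=
  @CLP R W unit (fun _ => tt) (fun _ => P).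

(* epistemic irrelevance of the first variable to the second:
   E(f | a) := P2 (f(a, .)) *)
Definition cond_fst (R : realType) (A B : finType) (P2 : (B -> R) -> R)
  : clp R (A * B)%type :=
  @CLP R (A * B)%type A (fun w => w.1) (fun a f => P2 (fun b => f (a, b))).

(* epistemic irrelevance of the second variable to the first:
   E(f | b) := P1 (f(., b)) *)
Definition cond_snd (R : realType) (A B : finType) (P1 : (A -> R) -> R)
  : clp R (A * B)%type :=
  @CLP R (A * B)%type B (fun w => w.2) (fun b f => P1 (fun a => f (a, b))).

Definition indep_candidate (R : realType) (A B : finType)
    (P1 : (A -> R) -> R) (P2 : (B -> R) -> R) (E : ((A * B)%type -> R) -> R) : Prop :=
  [/\ coherent_lp E,
      (forall g : A -> R, E (fun w => g w.1) = P1 g),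
      (forall h : B -> R, E (fun w => h w.2) = P2 h) &
      coherent_family (fam3 (uncond E) (cond_fst A P2) (cond_snd B P1))].

Definition is_indep_nat_ext (R : realType) (A B : finType)
    (P1 : (A -> R) -> R) (P2 : (B -> R) -> R) (E : ((A * B)%type -> R) -> R) : Prop :=
  indep_candidate P1 P2 E /\
  forall E', indep_candidate P1 P2 E' -> forall f, E f <= E' f.

Arguments coherent_lp {R A} P.
Arguments upper {R A} P f.
Arguments ind {R A} p _.
Arguments is_indep_nat_ext {R A B} P1 P2 E.
Arguments indep_candidate {R A B} P1 P2 E.

(* Main.v *)
Require Import Defs.
From HB Require Import structures.
From mathcomp Require Import all_boot all_order all_algebra.
From mathcomp Require Import reals.
From mathcomp Require Import boolp classical_sets.
From mathcomp Require Import ring lra.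
Set Implicit Arguments. Unset Strict Implicit. Unset Printing Implicit Defensive.
Import Order.TTheory GRing.Theory Num.Theory.
Local Open Scope ring_scope.


Section HB.
Variable R : realType.

Lemma inf_le' (Pr : R -> Prop) (lb y : R) :
  (forall v, Pr v -> lb <= v) -> Pr y -> inf Pr <= y.
Proof. by move=> hlb Py; apply: (ge_inf (E:=Pr)) => //; exists lb. Qed.

Lemma le_inf' (Pr : R -> Prop) (x y : R) :
  Pr y -> (forall v, Pr v -> x <= v) -> x <= inf Pr.
Proof. by move=> Py hx; apply: lb_le_inf; [exists y|]. Qed.

Definition sublin n (U : ('I_n -> R) -> R) :=
  (forall x y, U (fun i => x i + y i) <= U x + U y) /\
  (forall l x, 0 <= l -> U (fun i => l * x i) = l * U x).

Definition join n (y : 'I_n -> R) (t : R) : 'I_n.+1 -> R :=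
  fun i => if unlift ord_max i is Some j then y j else t.
Definition restr n (y : 'I_n.+1 -> R) : 'I_n -> R := fun j => y (lift ord_max j).

Lemma join_lift n (y : 'I_n -> R) t j : join y t (lift ord_max j) = y j.
Proof. by rewrite /join liftK. Qed.
Lemma join_max n (y : 'I_n -> R) t : join y t ord_max = t.
Proof. by rewrite /join unlift_none. Qed.
Lemma join_restr n (y : 'I_n.+1 -> R) : join (restr y) (y ord_max) = y.
Proof. by apply: funext => i; rewrite /join /restr; case: unliftP => [j ->|->]. Qed.

Lemma sum_split n (F : 'I_n.+1 -> R) :
  \sum_(i < n.+1) F i = \sum_(j < n) F (lift ord_max j) + F ord_max.
Proof.
rewrite big_ord_recr /=; congr (_ + _); apply: eq_bigr => j _; congr F.
by apply: val_inj => /=; rewrite /bump leqNgt ltn_ord.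
Qed.

Lemma join_add n (y z : 'I_n -> R) t s :
  join (fun i => y i + z i) (t + s) = (fun i => join y t i + join z s i).
Proof. by apply: funext => i; rewrite /join; case: unliftP. Qed.
Lemma join_scale n (y : 'I_n -> R) l t :
  join (fun i => l * y i) (l * t) = (fun i => l * join y t i).
Proof. by apply: funext => i; rewrite /join; case: unliftP. Qed.

Lemma sublin0 n (U : ('I_n -> R) -> R) : sublin U -> U (fun _ => 0) = 0.
Proof.
case=> _ hom; have h := hom 0 (fun _ => 0) (lexx 0).
transitivity (U (fun i : 'I_n => 0 * (fun _ => 0) i)).
  by congr U; apply: funext => i; rewrite mul0r.
by rewrite h mul0r.
Qed.

Theorem hb n : forall U : ('I_n -> R) -> R, sublin U -> forall x0,
  exists w : 'I_n -> R, (forall y, \sum_i w i * y i <= U y) /\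
                        \sum_i w i * x0 i = U x0.
Proof.
elim: n => [|n IH] U sU x0.
  exists (fun _ => 0); split=> [y|]; rewrite big_ord0.
    have -> : y = (fun _ => 0) by apply: funext => -[].
    by rewrite sublin0.
  have -> : x0 = (fun _ => 0) by apply: funext => -[].
  by rewrite sublin0.
have U0 := sublin0 sU.
case: sU => [sub hom].
set x0' := restr x0; set t0 := x0 ord_max.
pose phi t := U (join x0' t).
have cvx : forall r u, 0 < r -> 0 < u ->
    (r + u) * phi t0 <= r * phi (t0 - u) + u * phi (t0 + r).
  move=> r u r0 u0.
  have ru0 : 0 < r + u by rewrite addr_gt0.
  have e : join x0' t0 = (fun i => (r / (r + u)) * join x0' (t0 - u) i +
                                  (u / (r + u)) * join x0' (t0 + r) i).
    apply: funext => i; rewrite /join; case: unliftP => [j _|_].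
      by rewrite -mulrDl -mulrDl divff ?mul1r // gt_eqF.
    by field; rewrite gt_eqF.
  have := sub (fun i => (r / (r + u)) * join x0' (t0 - u) i)
              (fun i => (u / (r + u)) * join x0' (t0 + r) i).
  have hr : 0 <= r / (r + u) by rewrite divr_ge0 // ltW.
  have hu : 0 <= u / (r + u) by rewrite divr_ge0 // ltW.
  rewrite -e (hom _ _ hr) (hom _ _ hu) -/(phi t0) -/(phi (t0 - u)) -/(phi (t0 + r)).
  move=> h; rewrite -(@ler_pM2l _ (r + u)^-1) ?invr_gt0 // mulrA mulVf ?gt_eqF // mul1r.
  by apply: (le_trans h); rewrite mulrDr !mulrA ![_^-1 * _]mulrC.
pose slopes := fun v : R => exists2 s, 0 < s & v = (phi (t0 + s) - phi t0) / s.
pose c := inf slopes.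
have slb : forall u, 0 < u -> forall v, slopes v -> (phi t0 - phi (t0 - u)) / u <= v.
  move=> u u0 v [s s0 ->].
  rewrite ler_pdivrMr // mulrAC ler_pdivlMr //.
  have := cvx s u s0 u0; lra.
have subg : forall s, c * s <= phi (t0 + s) - phi t0.
  move=> s; case: (ltgtP s 0) => [sn|sp|->]; last by rewrite addr0 subrr mulr0.
  - have u0 : 0 < - s by rewrite oppr_gt0.
    have : (phi t0 - phi (t0 - - s)) / - s <= c.
      by apply: le_inf' (slb _ u0); exists 1; rewrite ?ltr01 //.
    rewrite opprK ler_pdivrMr // => h; lra.
  - have : c <= (phi (t0 + s) - phi t0) / s.
      by apply: (inf_le' (slb 1 ltr01)); exists s.
    by rewrite ler_pdivlMr.
pose Vset y' := fun v : R => exists t, v = U (join y' t) - c * t.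
pose V y' := inf (Vset y').
have Vlb : forall y', forall v, Vset y' v ->
    phi t0 - c * t0 - U (join (fun i => x0' i - y' i) 0) <= v.
  move=> y' v [t ->].
  have h1 := sub (join y' t) (join (fun i => x0' i - y' i) 0).
  have e : (fun i => join y' t i + join (fun i => x0' i - y' i) 0 i) = join x0' t.
    by apply: funext => i; rewrite /join; case: unliftP => [j _|_]; rewrite ?addr0 // addrC subrK.
  rewrite e in h1.
  have h2 := subg (t - t0); rewrite addrCA subrr addr0 in h2.
  rewrite /phi in h2 *; lra.
have Vle : forall y' t, V y' <= U (join y' t) - c * t.
  by move=> y' t; apply: (inf_le' (Vlb y')); exists t.
have leV : forall y' x, (forall t, x <= U (join y' t) - c * t) -> x <= V y'.
  move=> y' x h; apply: (le_inf' (y := U (join y' 0) - c * 0)); first by exists 0.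
  by move=> v [t ->]; apply: h.
have sV : sublin V.
  split.
    move=> y z.
    have h : forall t s, V (fun i => y i + z i) <= (U (join y t) - c * t) + (U (join z s) - c * s).
      move=> t s; apply: (le_trans ((Vle) _ (t + s))); rewrite join_add.
      have := sub (join y t) (join z s); lra.
    suff : V (fun i => y i + z i) - V y <= V z by lra.
    apply: (leV) => s.
    suff : V (fun i => y i + z i) - (U (join z s) - c * s) <= V y by lra.
    apply: (leV) => t; have := h t s; lra.
  move=> l x l0; case: (ltgtP l 0) => [|lp|->]; first by rewrite ltNge l0.
  - have lx0 : l != 0 by rewrite gt_eqF.
    have h1 : forall t, V (fun i => l * x i) <= l * (U (join x t) - c * t).
      move=> t; apply: le_trans ((Vle) _ (l * t)) _.
      rewrite join_scale (hom _ _ (ltW lp)).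
      have -> : l * (U (join x t) - c * t) = l * U (join x t) - c * (l * t) by ring.
      by [].
    apply/eqP; rewrite eq_le; apply/andP; split.
      have : V (fun i => l * x i) / l <= V x.
        apply: (leV) => t; rewrite ler_pdivrMr // mulrC; exact: h1.
      by rewrite ler_pdivrMr // mulrC.
    apply: (leV) => t.
    have e : join (fun i => l * x i) t = (fun i => l * join x (t / l) i).
      rewrite -join_scale; congr join; by field.
    rewrite e (hom _ _ (ltW lp)).
    have := Vle x (t / l); rewrite -(ler_pM2l lp) => h; apply: (le_trans h).
    have -> : l * (U (join x (t / l)) - c * (t / l)) = l * U (join x (t / l)) - c * t by field.
    by [].
  - rewrite mul0r; have -> : (fun i : 'I_n => 0 * x i) = (fun _ => 0).
      by apply: funext => i; rewrite mul0r.
    apply/eqP; rewrite eq_le; apply/andP; split.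
      apply: (le_trans ((Vle) _ 0)); rewrite mulr0 subr0.
      have -> : join (fun _ : 'I_n => 0) 0 = (fun _ => 0).
        by apply: funext => i; rewrite /join; case: unliftP.
      by rewrite U0.
    apply: (leV) => t.
    have h := sub (join x0' t0) (join (fun _ => 0) t).
    have e : (fun i => join x0' t0 i + join (fun _ : 'I_n => 0) t i) = join x0' (t0 + t).
      by apply: funext => i; rewrite /join; case: unliftP => [j _|_]; rewrite ?addr0.
    rewrite e in h; have := subg t; rewrite /phi in h *; lra.
have Vx0 : V x0' = phi t0 - c * t0.
  apply/eqP; rewrite eq_le; apply/andP; split; first exact: Vle.
  apply: (leV) => t; have := subg (t - t0); rewrite addrCA subrr addr0 /phi; lra.
have [w' [hw1 hw2]] := IH V sV x0'.
exists (fun i => if unlift ord_max i is Some j then w' j else c); split.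
  move=> y; rewrite sum_split /= unlift_none.
  under eq_bigr do rewrite liftK.
  apply: (le_trans (lerD (hw1 (restr y)) (lexx _))).
  have := Vle (restr y) (y ord_max); rewrite join_restr; lra.
rewrite sum_split /= unlift_none.
under eq_bigr do rewrite liftK.
rewrite [X in X + _]hw2 Vx0 /phi /t0 /x0' join_restr; lra.
Qed.


Section Coh.
Variable A : finType.

Definition dom (P : (A -> R) -> R) (p : A -> R) :=
  forall g, P g <= \sum_a p a * g a.

Lemma coh0 (P : (A -> R) -> R) : coherent_lp P -> P (fun _ => 0) = 0.
Proof.
case=> _ hom _; have h := hom 0 (fun _ => 0) (lexx 0).
transitivity (P (fun a => 0 * (fun _ => 0) a)).
  by congr P; apply: funext => i; rewrite mul0r.
by rewrite h mul0r.
Qed.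

Lemma cohmono (P : (A -> R) -> R) : coherent_lp P -> forall f g, (forall a, f a <= g a) -> P f <= P g.
Proof.
move=> cP f g fg; case: (cP) => lb _ sup.
have := sup f (fun a => g a - f a).
have -> : (fun a => f a + (g a - f a)) = g by apply: funext => a; rewrite addrC subrK.
have : 0 <= P (fun a => g a - f a) by apply: lb => a; rewrite subr_ge0.
lra.
Qed.

Lemma cohconst (P : (A -> R) -> R) c : coherent_lp P -> P (fun _ => c) = c.
Proof.
move=> cP; case: (cP) => lb _ sup.
apply/eqP; rewrite eq_le; apply/andP; split; last by apply: lb.
have := sup (fun _ => c) (fun _ => - c).
have -> : (fun _ : A => c + - c) = (fun _ => 0) by apply: funext => a; rewrite subrr.
rewrite coh0 //; have : - c <= P (fun _ => - c) by apply: lb.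
lra.
Qed.

Lemma sum_enum_rank (F : 'I_#|A| -> R) : \sum_(a : A) F (enum_rank a) = \sum_i F i.
Proof.
by rewrite (reindex (@enum_rank A)) //; apply: onW_bij; exact: enum_rank_bij.
Qed.

Theorem envelope (P : (A -> R) -> R) : coherent_lp P -> forall f, exists p, dom P p /\ \sum_a p a * f a = P f.
Proof.
move=> cP f; case: (cP) => lb hom sup.
pose U (y : 'I_#|A| -> R) := - P (fun a => - y (enum_rank a)).
have sU : sublin U.
  split.
    move=> x y; rewrite /U.
    have := sup (fun a => - x (enum_rank a)) (fun a => - y (enum_rank a)).
    have -> : (fun a => - x (enum_rank a) + - y (enum_rank a)) =
              (fun a => - (x (enum_rank a) + y (enum_rank a))) by apply: funext => a; rewrite opprD.
    lra.
  move=> l x l0; rewrite /U.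
  have -> : (fun a => - (l * x (enum_rank a))) = (fun a => l * - x (enum_rank a)).
    by apply: funext => a; rewrite mulrN.
  by rewrite hom // mulrN.
have [w [hw1 hw2]] := hb sU (fun i => - f (enum_val i)).
exists (fun a => w (enum_rank a)); split.
  move=> g; have := hw1 (fun i => - g (enum_val i)); rewrite /U.
  have -> : (fun a => - - g (enum_val (enum_rank a))) = g.
    by apply: funext => a; rewrite opprK enum_rankK.
  rewrite -(sum_enum_rank (fun i => w i * - g (enum_val i))).
  under eq_bigr do rewrite enum_rankK mulrN.
  rewrite sumrN; lra.
move: hw2; rewrite /U.
have -> : (fun a => - - f (enum_val (enum_rank a))) = f.
  by apply: funext => a; rewrite opprK enum_rankK.
rewrite -(sum_enum_rank (fun i => w i * - f (enum_val i))).
under eq_bigr do rewrite enum_rankK mulrN.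
rewrite sumrN => h; lra.
Qed.

Lemma dom_ge0 (P : (A -> R) -> R) p : coherent_lp P -> dom P p -> forall a, 0 <= p a.
Proof.
move=> cP dp a; case: (cP) => lb _ _.
have := dp (fun b => (b == a)%:R).
rewrite (bigD1 a) //= eqxx mulr1 big1 ?addr0; last first.
  by move=> b /negbTE ->; rewrite mulr0.
apply: le_trans; apply: lb => b; exact: ler0n.
Qed.

Lemma dom_sum1 (P : (A -> R) -> R) p : coherent_lp P -> dom P p -> \sum_a p a = 1.
Proof.
move=> cP dp.
have h1 : 1 <= \sum_a p a.
  have := dp (fun _ => 1); rewrite cohconst //.
  by under eq_bigr do rewrite mulr1.
have h2 : -1 <= - \sum_a p a.
  have := dp (fun _ => -1); rewrite cohconst //.
  by under eq_bigr do rewrite mulrN1; rewrite sumrN.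
lra.
Qed.

Lemma dom_pos (P : (A -> R) -> R) a : coherent_lp P -> 0 < - P (fun b => - (b == a)%:R) ->
  exists p, dom P p /\ 0 < p a.
Proof.
move=> cP pos; have [p [dp e]] := envelope cP (fun b => - (b == a)%:R).
exists p; split => //.
move: e; under eq_bigr do rewrite mulrN; rewrite sumrN.
rewrite (bigD1 a) //= eqxx mulr1 big1 ?addr0; last first.
  by move=> b /negbTE ->; rewrite mulr0.
move=> e; lra.
Qed.

End Coh.
End HB.


Section Prod.
Variable R : realType.
Variables A B : finType.
Variable S : (A -> R) -> R.
Variable P2 : (B -> R) -> R.
Hypothesis cS : coherent_lp S.
Hypothesis cP : coherent_lp P2.

Definition pi (p : A -> R) (q : B -> R) (h : A * B -> R) :=
  \sum_(w : A * B) p w.1 * q w.2 * h w.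

Lemma piA p q h : pi p q h = \sum_a p a * \sum_b q b * h (a, b).
Proof.
rewrite /pi; symmetry; under eq_bigr do rewrite mulr_sumr.
by rewrite pair_bigA; apply: eq_bigr => -[a b] _ /=; rewrite mulrA.
Qed.

Lemma piB p q h : pi p q h = \sum_b q b * \sum_a p a * h (a, b).
Proof.
rewrite piA; under eq_bigr do rewrite mulr_sumr.
rewrite exchange_big /=; apply: eq_bigr => b _; rewrite mulr_sumr.
apply: eq_bigr => a _ /=; ring.
Qed.

Lemma pi_add p q f g : pi p q (fun w => f w + g w) = pi p q f + pi p q g.
Proof. by rewrite /pi -big_split; apply: eq_bigr => w _; rewrite mulrDr. Qed.

Lemma pi_scale p q l f : pi p q (fun w => l * f w) = l * pi p q f.
Proof. by rewrite /pi mulr_sumr; apply: eq_bigr => w _; ring. Qed.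

Variables (p : A -> R) (q : B -> R).
Hypothesis dp : dom S p.
Hypothesis dq : dom P2 q.

#[local] Set Default Proof Using "All".
Lemma pi_fst g : pi p q (fun w => g w.1) = \sum_a p a * g a.
Proof.
rewrite piA; apply: eq_bigr => a _ /=.
rewrite -mulr_suml (dom_sum1 cP dq) mul1r; ring.
Qed.

Lemma pi_snd h : pi p q (fun w => h w.2) = \sum_b q b * h b.
Proof.
rewrite piB; apply: eq_bigr => b _ /=.
rewrite -mulr_suml (dom_sum1 cS dp) mul1r; ring.
Qed.

Lemma pi_const c : pi p q (fun _ => c) = c.
Proof.
rewrite (pi_fst (fun _ => c)) -mulr_suml (dom_sum1 cS dp) mul1r //.
Qed.

Lemma pq_ge0 w : 0 <= p w.1 * q w.2.
Proof. by rewrite mulr_ge0 // ?(dom_ge0 cS dp) ?(dom_ge0 cP dq). Qed.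

Lemma pi_mono f g : (forall w, f w <= g w) -> pi p q f <= pi p q g.
Proof. by move=> h; apply: ler_sum => w _; apply: ler_wpM2l; [exact: pq_ge0|]. Qed.

Lemma pi_ge c f : (forall w, c <= f w) -> c <= pi p q f.
Proof. by move=> h; rewrite -(pi_const c); apply: pi_mono. Qed.

Lemma sum_shift (C : finType) (r : C -> R) (x : C -> R) c :
  \sum_i r i = 1 -> \sum_i r i * (x i - c) = \sum_i r i * x i - c.
Proof.
move=> h; rewrite -[c in RHS]mul1r -h mulr_suml -sumrB.
by apply: eq_bigr => i _; rewrite mulrBr.
Qed.

Lemma pi_G2 f : 0 <= pi p q (fun w => f w - P2 (fun b => f (w.1, b))).
Proof.
rewrite piA; apply: sumr_ge0 => a _; apply: mulr_ge0; first exact: (dom_ge0 cS dp).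
rewrite /= sum_shift ?(dom_sum1 cP dq) // subr_ge0; exact: dq.
Qed.

Lemma pi_G3 f : 0 <= pi p q (fun w => f w - S (fun a => f (a, w.2))).
Proof.
rewrite piB; apply: sumr_ge0 => b _; apply: mulr_ge0; first exact: (dom_ge0 cP dq).
rewrite /= sum_shift ?(dom_sum1 cS dp) // subr_ge0; exact: dp.
Qed.

End Prod.

Lemma fin_lb (R : realType) (W : finType) (f : W -> R) : exists c, forall w, c <= f w.
Proof.
exists (- \sum_w `|f w|) => w.
rewrite (bigD1 w) //= opprD; apply: (le_trans (y := - `|f w|)).
  by rewrite lerBlDr lerDl sumr_ge0.
by rewrite lerNl -normrN ler_norm.
Qed.

Lemma fin_pos (R : realType) (W : finType) (h : W -> R) :
  (forall w, 0 < h w) -> exists2 D, 0 < D & forall w, D <= h w.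
Proof.
move=> hp.
have : forall s : seq W, exists2 D, 0 < D & forall w, w \in s -> D <= h w.
  elim=> [|x s [D D0 hD]]; first by exists 1 => //.
  case: (leP D (h x)) => hx.
    exists D => // w; rewrite inE => /orP[/eqP ->//|]; exact: hD.
  exists (h x) => // w; rewrite inE => /orP[/eqP ->//|/hD]; exact: le_trans (ltW hx).
case/(_ (enum W)) => D D0 hD; exists D => // w; apply: hD; by rewrite mem_enum.
Qed.

Section Cand.
Variable R : realType.
Variables A B : finType.
Variable S : (A -> R) -> R.
Variable P2 : (B -> R) -> R.
Hypothesis cS : coherent_lp S.
Hypothesis cP : coherent_lp P2.

Definition Dset (f : A * B -> R) : set R :=
  fun v => exists p q, [/\ dom S p, dom P2 q & v = pi p q f].

Definition Ep (f : A * B -> R) := inf (Dset f).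

Lemma dom_ex1 : exists p, dom S p.
Proof. by have [p [dp _]] := envelope cS (fun _ => 0); exists p. Qed.
Lemma dom_ex2 : exists q, dom P2 q.
Proof. by have [q [dq _]] := envelope cP (fun _ => 0); exists q. Qed.

Lemma Dset_lb f : exists c, forall v, Dset f v -> c <= v.
Proof.
have [c hc] := fin_lb f; exists c => v [p [q [dp dq ->]]].
exact: (pi_ge cS cP dp dq).
Qed.

Lemma Ep_le f p q : dom S p -> dom P2 q -> Ep f <= pi p q f.
Proof.
move=> dp dq; have [c hc] := Dset_lb f.
by apply: (inf_le' hc); exists p, q.
Qed.

Lemma le_Ep f x : (forall p q, dom S p -> dom P2 q -> x <= pi p q f) -> x <= Ep f.
Proof.
move=> h; have [p dp] := dom_ex1; have [q dq] := dom_ex2.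
apply: (le_inf' (y := pi p q f)); first by exists p, q.
by move=> v [p' [q' [dp' dq' ->]]]; apply: h.
Qed.

Lemma Ep_coh : coherent_lp Ep.
Proof.
split.
- move=> f c hc; apply: le_Ep => p q dp dq; exact: (pi_ge cS cP dp dq).
- move=> l f l0; case: (ltgtP l 0) => [|lp|->]; first by rewrite ltNge l0.
  + apply/eqP; rewrite eq_le; apply/andP; split.
      have : Ep (fun w => l * f w) / l <= Ep f.
        apply: le_Ep => p q dp dq; rewrite ler_pdivrMr // mulrC -pi_scale.
        exact: Ep_le.
      by rewrite ler_pdivrMr // mulrC.
    apply: le_Ep => p q dp dq; rewrite pi_scale ler_pM2l //; exact: Ep_le.
  + rewrite mul0r; apply/eqP; rewrite eq_le; apply/andP; split.
      have [p dp] := dom_ex1; have [q dq] := dom_ex2.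
      apply: le_trans (Ep_le _ dp dq) _; rewrite pi_scale mul0r //.
    apply: le_Ep => p q dp dq; rewrite pi_scale mul0r //.
- move=> f g; apply: le_Ep => p q dp dq; rewrite pi_add.
  by apply: lerD; apply: Ep_le.
Qed.

Lemma Ep_fst g : Ep (fun w => g w.1) = S g.
Proof.
apply/eqP; rewrite eq_le; apply/andP; split.
  have [p [dp e]] := envelope cS g; have [q dq] := dom_ex2.
  by apply: le_trans (Ep_le _ dp dq) _; rewrite (pi_fst cS cP dp dq) e.
apply: le_Ep => p q dp dq; rewrite (pi_fst cS cP dp dq); exact: dp.
Qed.

Lemma Ep_snd h : Ep (fun w => h w.2) = P2 h.
Proof.
apply/eqP; rewrite eq_le; apply/andP; split.
  have [q [dq e]] := envelope cP h; have [p dp] := dom_ex1.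
  by apply: le_trans (Ep_le _ dp dq) _; rewrite (pi_snd cS cP dp dq) e.
apply: le_Ep => p q dp dq; rewrite (pi_snd cS cP dp dq); exact: dq.
Qed.

End Cand.


Section Fam.
Variable R : realType.
Variables A B : finType.
Variable S : (A -> R) -> R.
Variable P2 : (B -> R) -> R.
Hypothesis cS : coherent_lp S.
Hypothesis cP : coherent_lp P2.

Lemma sum3 (W : finType) (F : 'I_3 -> clp R W) (fs : 'I_3 -> W -> R) w :
  \sum_(j < 3) Gclp (F j) (fs j) w =
  Gclp (F ord0) (fs ord0) w + Gclp (F (lift ord0 ord0)) (fs (lift ord0 ord0)) w +
  Gclp (F (lift ord0 (lift ord0 ord0))) (fs (lift ord0 (lift ord0 ord0))) w.
Proof.
by rewrite !big_ord_recl big_ord0 addr0 addrA.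
Qed.

Lemma pi_sub (p : A -> R) (q : B -> R) f g : pi p q (fun w : A * B => f w - g w) = pi p q f - pi p q g.
Proof.
rewrite /pi -sumrB; apply: eq_bigr => w _; by rewrite mulrBr.
Qed.

Lemma dom_pos_ex (C : finType) (P : (C -> R) -> R) r :
  coherent_lp P -> dom P r -> exists c, 0 < r c.
Proof.
move=> cQ dr; have s1 := dom_sum1 cQ dr.
case: (boolP [exists c, 0 < r c]) => [/existsP[c hc]|/existsPn h]; first by exists c.
have : \sum_c r c <= 0 by apply: sumr_le0 => c _; have := h c; rewrite -leNgt.
by rewrite s1 ler10.
Qed.

Section W.
Variables (p : A -> R) (q : B -> R).
Hypothesis dp : dom S p.
Hypothesis dq : dom P2 q.

Lemma witness (V : A * B -> R) (adm : A * B -> bool) :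
  (forall w, ~~ adm w -> V w = 0) -> 0 <= pi p q V ->
  (exists w, adm w /\ 0 < p w.1 * q w.2) -> exists w, adm w && (0 <= V w).
Proof.
move=> h0 hpi [ws [aws pws]].
case: (boolP [exists w, adm w && (0 <= V w)]) => [/existsP[w hw]|/existsPn hn].
  by exists w.
have neg : forall w, p w.1 * q w.2 * V w <= 0.
  move=> w; case: (boolP (adm w)) => aw; last by rewrite h0 // mulr0.
  have := hn w; rewrite aw /= -ltNge => hv.
  by apply: mulr_ge0_le0; [exact: (pq_ge0 cS cP dp dq)|exact: ltW].
have : pi p q V < 0.
  rewrite /pi (bigD1 ws) //=.
  apply: (le_lt_trans (y := p ws.1 * q ws.2 * V ws + 0)).
    by rewrite lerD2l; apply: sumr_le0 => w _; apply: neg.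
  rewrite addr0 pmulr_rlt0 //; have := hn ws; by rewrite aws /= -ltNge.
by rewrite ltNge hpi.
Qed.

Lemma pi_Gsum g1 g2 g3 :
  0 <= pi p q (fun w => (g1 w - Ep S P2 g1) + (g2 w - P2 (fun b => g2 (w.1, b)))
                       + (g3 w - S (fun a => g3 (a, w.2)))).
Proof.
rewrite pi_add pi_add.
apply: addr_ge0; [apply: addr_ge0|].
- by rewrite pi_sub (pi_const cS cP dp dq) subr_ge0; apply: Ep_le.
- exact: (pi_G2 cS cP dp dq).
- exact: (pi_G3 cS cP dp dq).
Qed.
End W.

Definition Fm := fam3 (uncond (Ep S P2)) (cond_fst A P2) (cond_snd B S).
Definition l1 : 'I_3 := lift ord0 ord0.
Definition l2 : 'I_3 := lift ord0 (lift ord0 ord0).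

Lemma Gsum0 (fs : 'I_3 -> A * B -> R) w :
  ~~ [exists j, inSupp (Fm j) (fs j) w] ->
  (fs ord0 w - Ep S P2 (fs ord0)) + (fs l1 w - P2 (fun b => fs l1 (w.1, b)))
    + (fs l2 w - S (fun a => fs l2 (a, w.2))) = 0.
Proof.
move/existsPn => h.
have h0 := h ord0; have h1 := h l1; have h2 := h l2.
rewrite /inSupp /= in h0 h1 h2.
move/existsPn: h0 => h0; move/existsPn: h1 => h1; move/existsPn: h2 => h2.
have e0 : fs ord0 = (fun _ => 0).
  by apply: funext => w'; have := h0 w'; rewrite /= negbK => /eqP.
have e1 : forall b, fs l1 (w.1, b) = 0.
  by move=> b; have := h1 (w.1, b); rewrite /= eqxx /= negbK => /eqP.
have e2 : forall a, fs l2 (a, w.2) = 0.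
  by move=> a; have := h2 (a, w.2); rewrite /= eqxx /= negbK => /eqP.
have -> : (fun b => fs l1 (w.1, b)) = (fun _ => 0) by apply: funext => b; apply: e1.
have -> : (fun a => fs l2 (a, w.2)) = (fun _ => 0) by apply: funext => a; apply: e2.
rewrite e0 (coh0 (Ep_coh cS cP)) (coh0 cS) (coh0 cP).
have := e1 w.2; have := e2 w.1; rewrite -!surjective_pairing => -> ->.
by rewrite !subrr !addr0.
Qed.

Hypothesis posS : forall a, 0 < upper S (ind (pred1 a)).
Hypothesis posP : forall b, 0 < upper P2 (ind (pred1 b)).


Lemma famcoh : coherent_family Fm.
Proof.
move=> fs j0 f0 w0.
set g1 := fs ord0; set g2 := fs l1; set g3 := fs l2.
pose G w := (g1 w - Ep S P2 g1) + (g2 w - P2 (fun b => g2 (w.1, b)))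
              + (g3 w - S (fun a => g3 (a, w.2))).
have eG : forall w, \sum_(j < 3) Gclp (Fm j) (fs j) w = G w.
  move=> w; rewrite sum3; reflexivity.
case: j0 => [[|[|[|//]]] Hj] /=.
- suff [w hw] : exists w, 0 <= G w - (f0 w - Ep S P2 f0).
    by exists w; rewrite eG; exact: hw.
  case: (boolP [exists w, 0 <= G w - (f0 w - Ep S P2 f0)]) => [/existsP[w hw]|/existsPn hn].
    by exists w.
  have [D D0 hD] := @fin_pos R _ (fun w => - (G w - (f0 w - Ep S P2 f0)))
    (fun w => (ltac:(have := hn w; rewrite -ltNge oppr_gt0; exact))).
  have : Ep S P2 f0 + D <= Ep S P2 f0.
    apply: (le_Ep cS cP) => p q dp dq.
    have h1 := pi_Gsum dp dq g1 g2 g3.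
    have h2 := pi_ge cS cP dp dq hD.
    have e : (fun w => - (G w - (f0 w - Ep S P2 f0))) =
             (fun w => (f0 w - Ep S P2 f0) - G w) by apply: funext => w; ring.
    rewrite e pi_sub pi_sub (pi_const cS cP dp dq) in h2.
    rewrite -/(pi p q G) in h1; lra.
  lra.
- have [p [dp pa]] := dom_pos cS (posS w0.1).
  have [q [dq eq]] := envelope cP (fun b => f0 (w0.1, b)).
  have [bs qbs] := dom_pos_ex cP dq.
  suff [w hw] : exists w, ((w.1 == w0.1) || [exists j, inSupp (Fm j) (fs j) w]) &&
      (0 <= G w - (if w.1 == w0.1 then f0 w - P2 (fun b => f0 (w.1, b)) else 0)).
    by exists w; rewrite eG; exact: hw.
  apply: (witness dp dq).
  - move=> w; rewrite negb_or => /andP[hb hs]; rewrite (negbTE hb) subr0; exact: Gsum0.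
  - rewrite pi_sub; have := pi_Gsum dp dq g1 g2 g3; rewrite -/(pi p q G).
    suff : pi p q (fun w => if w.1 == w0.1 then f0 w - P2 (fun b => f0 (w.1, b)) else 0) <= 0.
      lra.
    rewrite piA; apply: sumr_le0 => a _ /=.
    case: (eqVneq a w0.1) => [->|ne].
      rewrite (sum_shift cS cP dp dq) ?(dom_sum1 cP dq) // eq subrr mulr0 //.
    by rewrite big1 ?mulr0 // => b _; rewrite mulr0.
  - by exists (w0.1, bs); rewrite /= eqxx; split => //; rewrite mulr_gt0.
- have [q [dq qb]] := dom_pos cP (posP w0.2).
  have [p [dp ep]] := envelope cS (fun a => f0 (a, w0.2)).
  have [as_ pas] := dom_pos_ex cS dp.
  suff [w hw] : exists w, ((w.2 == w0.2) || [exists j, inSupp (Fm j) (fs j) w]) &&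
      (0 <= G w - (if w.2 == w0.2 then f0 w - S (fun a => f0 (a, w.2)) else 0)).
    by exists w; rewrite eG; exact: hw.
  apply: (witness dp dq).
  - move=> w; rewrite negb_or => /andP[hb hs]; rewrite (negbTE hb) subr0; exact: Gsum0.
  - rewrite pi_sub; have := pi_Gsum dp dq g1 g2 g3; rewrite -/(pi p q G).
    suff : pi p q (fun w => if w.2 == w0.2 then f0 w - S (fun a => f0 (a, w.2)) else 0) <= 0.
      lra.
    rewrite piB; apply: sumr_le0 => b _ /=.
    case: (eqVneq b w0.2) => [->|ne].
      rewrite (sum_shift cS cP dp dq) ?(dom_sum1 cS dp) // ep subrr mulr0 //.
    by rewrite big1 ?mulr0 // => a _; rewrite mulr0.
  - by exists (as_, w0.2); rewrite /= eqxx; split => //; rewrite mulr_gt0.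
Qed.

Lemma indep_pos (E : (A * B -> R) -> R) : is_indep_nat_ext S P2 E ->
  coherent_lp E /\ forall x, 0 < upper E (ind (pred1 x)).
Proof.
case=> [[cE _ _ _] hmin]; split => // x.
have cand : indep_candidate S P2 (Ep S P2).
  split; [exact: Ep_coh | exact: Ep_fst | exact: Ep_snd | exact: famcoh].
have h1 := hmin _ cand (fun w => - ind (pred1 x) w).
have [p [dp px]] := dom_pos cS (posS x.1).
have [q [dq qx]] := dom_pos cP (posP x.2).
have h2 := Ep_le cS cP (fun w => - ind (pred1 x) w) dp dq.
have e : pi p q (fun w => - ind (pred1 x) w) = - (p x.1 * q x.2).
  rewrite /pi (bigD1 x) //= /ind /= eqxx big1 ?addr0.
    by rewrite mulrN mulr1.
  by move=> w /negbTE ->; rewrite mulr0n oppr0 mulr0.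
rewrite e in h2.
have : 0 < p x.1 * q x.2 by rewrite mulr_gt0.
rewrite /upper; lra.
Qed.

End Fam.


Section Chain.
Variable R : realType.

Lemma upper_mono (A : finType) (P : (A -> R) -> R) f g :
  coherent_lp P -> (forall a, f a <= g a) -> upper P f <= upper P g.
Proof.
move=> cP h; rewrite /upper lerN2; apply: (cohmono cP) => a; by rewrite lerN2.
Qed.

Lemma upper_event (A : finType) (P : (A -> R) -> R) (ev : pred A) y :
  coherent_lp P -> ev y -> upper P (ind (pred1 y)) <= upper P (ind ev).
Proof.
move=> cP hy; apply: upper_mono => // a; rewrite /ind /=.
by case: eqP => [->|_]; rewrite ?hy // ler0n.
Qed.

Lemma marg_coh (X W : finType) (Q : (X -> R) -> R) (E : X -> (W -> R) -> R)
  (P : (X * W -> R) -> R) :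
  coherent_lp Q -> (forall x, coherent_lp (E x)) ->
  (forall f, P f = Q (fun x => E x (fun w => f (x, w)))) -> coherent_lp P.
Proof.
move=> cQ cE hP; split.
- move=> f c hc; rewrite hP; case: cQ => lb _ _; apply: lb => x.
  by case: (cE x) => lb' _ _; apply: lb' => w; apply: hc.
- move=> l f l0; rewrite !hP; case: (cQ) => _ hom _; rewrite -hom //.
  congr Q; apply: funext => x; by case: (cE x) => _ hom' _; rewrite hom'.
- move=> f g; rewrite !hP; case: (cQ) => _ _ sup.
  apply: le_trans (sup _ _) _; apply: (cohmono cQ) => x.
  by case: (cE x) => _ _ sup'; apply: sup'.
Qed.

Lemma marg_pos (X W : finType) (Q : (X -> R) -> R) (E : X -> (W -> R) -> R)
  (P : (X * W -> R) -> R) :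
  coherent_lp Q -> (forall x, coherent_lp (E x)) ->
  (forall f, P f = Q (fun x => E x (fun w => f (x, w)))) ->
  (forall x, 0 < upper Q (ind (pred1 x))) ->
  (forall x w, 0 < upper (E x) (ind (pred1 w))) ->
  forall y, 0 < upper P (ind (pred1 y)).
Proof.
move=> cQ cE hP pQ pE [x0 w0].
set u := upper (E x0) (ind (pred1 w0)).
have u0 : 0 < u := pE x0 w0.
have e : (fun x => E x (fun w => - ind (pred1 (x0, w0)) (x, w))) =
         (fun x => u * - ind (pred1 x0) x).
  apply: funext => x; rewrite /ind /=.
  case: (eqVneq x x0) => [->|ne].
    rewrite ?eqxx mulrN mulr1 /u /upper opprK; congr E; apply: funext => w.
    by rewrite /ind /= xpair_eqE eqxx.
  rewrite mulr0n oppr0 mulr0.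
  have -> : (fun w => - ((x, w) == (x0, w0))%:R) = (fun _ : W => 0 :> R).
    by apply: funext => w; rewrite xpair_eqE (negbTE ne) /= oppr0.
  exact: coh0.
rewrite /upper hP e; case: (cQ) => _ hom _; rewrite hom; last exact: ltW.
have := pQ x0; rewrite /upper => h.
by rewrite -mulrN mulr_gt0.
Qed.

Lemma comp_coh (A B : finType) (S : (A -> R) -> R) (phi : A -> B) (E : (B -> R) -> R) :
  coherent_lp S -> (forall f, E f = S (fun a => f (phi a))) -> coherent_lp E.
Proof.
move=> [lb hom sup] hE; split.
- by move=> f c hc; rewrite hE; apply: lb.
- by move=> l f l0; rewrite !hE hom.
- by move=> f g; rewrite !hE; apply: sup.
Qed.

Lemma outs_ex (X O : nat -> finType) : forall m k,
  (forall j, (k <= j < k + m)%N -> (0 < #|X j|)%N) ->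
  forall o : Os O m k, exists y : Ys X O m k, outs y = o.
Proof.
elim=> [|m IH] k hX o /=; first by exists tt; case: o.
case: o => o1 o'.
have /card_gt0P [x _] : (0 < #|X k|)%N by apply: hX; rewrite leqnn /= addnS ltnS leq_addr.
have [y' hy'] : exists y' : Ys X O m k.+1, outs y' = o'.
  apply: IH => j /andP[h1 h2]; apply: hX.
  by rewrite (ltnW h1) /= addnS -addSn.
by exists (x, (o1, y')); rewrite /= hy'.
Qed.

End Chain.

Unset Implicit Arguments.


Theorem proposition1 (R : realType) (n : nat) (X O : nat -> finType)
  (Q : forall k : nat, X k.-1 -> (X k -> R) -> R)
  (S : forall k : nat, X k -> (O k -> R) -> R)
  (P : forall k m : nat, X k.-1 -> (Ys X O m.+1 k -> R) -> R)
  (E : forall k m : nat, X k -> ((O k * Ys X O m k.+1)%type -> R) -> R) :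
  (1 <= n)%N ->
  #|X 0%N| = 1%N ->
  (forall k, (1 <= k <= n)%N -> (0 < #|X k|)%N) ->
  (forall k, (1 <= k <= n)%N -> (0 < #|O k|)%N) ->
  (forall k, (1 <= k <= n)%N -> forall z : X k.-1, coherent_lp (Q k z)) ->
  (forall k, (1 <= k <= n)%N -> forall z : X k, coherent_lp (S k z)) ->
  (forall k, (1 <= k <= n)%N -> forall (z : X k.-1) (x : X k),
      0 < upper (Q k z) (ind (pred1 x))) ->
  (forall k, (1 <= k <= n)%N -> forall (z : X k) (o : O k),
      0 < upper (S k z) (ind (pred1 o))) ->
  (* E_n := S_n *)
  (forall (z : X n) (f : (O n * Ys X O 0 n.+1)%type -> R),
      E n 0%N z f = S n z (fun o => f (o, tt))) ->
  (* E_k, k < n : independent natural extension of S_k and P_{k+1} *)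
  (forall k m : nat, (1 <= k)%N -> (k + m.+1 = n)%N -> forall z : X k,
      is_indep_nat_ext (S k z) (P k.+1 m z) (E k m.+1 z)) ->
  (* P_k : marginal extension *)
  (forall k m : nat, (1 <= k)%N -> (k + m = n)%N ->
      forall (z : X k.-1) (f : Ys X O m.+1 k -> R),
      P k m z f = Q k z (fun x => E k m x (fun w => f (x, w)))) ->
  forall k m : nat, (1 <= k)%N -> (k + m = n)%N ->
    (forall (z : X k.-1) (o : Os O m.+1 k),
        0 < upper (P k m z) (ind (fun w => outs w == o))) /\
    (forall (z : X k) (o : Os O m.+1 k),
        0 < upper (E k m z) (ind (fun w => (w.1, outs w.2) == o))).
Proof.
move=> n1 X0 hX hO hQ hS hQp hSp hEn hInd hP.
have rng : forall k m, (1 <= k)%N -> (k + m = n)%N -> (1 <= k <= n)%N.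
  by move=> k m k1 hkm; rewrite k1 -hkm leq_addr.
have claim : forall m k, (1 <= k)%N -> (k + m = n)%N ->
  (forall z : X k.-1, coherent_lp (P k m z) /\
      forall y, 0 < upper (P k m z) (ind (pred1 y))) /\
  (forall z : X k, coherent_lp (E k m z) /\
      forall y, 0 < upper (E k m z) (ind (pred1 y))).
  elim=> [|m IH] k k1 hkm.
  - have hk := rng _ _ k1 hkm.
    rewrite addn0 in hkm; subst k.
    have hE : forall z, coherent_lp (E n 0%N z) /\
        forall y, 0 < upper (E n 0%N z) (ind (pred1 y)).
      move=> z; split.
        apply: (comp_coh (phi := fun o => (o, tt)) (hS n hk z)) => f; exact: hEn.
      move=> [o1 []]; rewrite /upper hEn.
      have := hSp n hk z o1; rewrite /upper /ind /=.
      have -> : (fun o => - ((o, tt) == (o1, tt))%:R) = (fun o => - (o == o1)%:R :> R).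
        by apply: funext => o; rewrite xpair_eqE andbT.
      by [].
    split=> // z; split.
      exact: (marg_coh (hQ n hk z) (fun x => (hE x).1) (hP n 0%N n1 (addn0 n) z)).
    exact: (marg_pos (hQ n hk z) (fun x => (hE x).1) (hP n 0%N n1 (addn0 n) z)
              (hQp n hk z) (fun x => (hE x).2)).
  - have hk := rng _ _ k1 hkm.
    have hkm' : (k.+1 + m = n)%N by rewrite addSn -addnS.
    have [IHP _] := IH k.+1 (ltn0Sn k) hkm'.
    have hE : forall z : X k, coherent_lp (E k m.+1 z) /\
        forall y, 0 < upper (E k m.+1 z) (ind (pred1 y)).
      move=> z; exact: (indep_pos (hS k hk z) (IHP z).1 (hSp k hk z) (IHP z).2
                          (hInd k m k1 hkm z)).
    split=> // z; split.
      exact: (marg_coh (hQ k hk z) (fun x => (hE x).1) (hP k m.+1 k1 hkm z)).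
    exact: (marg_pos (hQ k hk z) (fun x => (hE x).1) (hP k m.+1 k1 hkm z)
              (hQp k hk z) (fun x => (hE x).2)).
move=> k m k1 hkm; have [hPk hEk] := claim m k k1 hkm; split.
- move=> z o.
  have [y hy] : exists y : Ys X O m.+1 k, outs y = o.
    apply: outs_ex => j /andP[h1 h2]; apply: hX.
    by rewrite (leq_trans k1 h1) /= -ltnS -hkm -addnS.
  apply: lt_le_trans ((hPk z).2 y) _; apply: upper_event (hPk z).1 _.
  by rewrite hy.
- move=> z [o1 o2].
  have [y hy] : exists y : Ys X O m k.+1, outs y = o2.
    apply: outs_ex => j /andP[h1 h2]; apply: hX.
    by rewrite (leq_trans k1 (ltnW h1)) /= -ltnS addSn hkm in h2 *.
  apply: lt_le_trans ((hEk z).2 (o1, y)) _; apply: upper_event (hEk z).1 _.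
  by rewrite /= hy.
Qed.
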